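(* Let $f_1,\dots,f_n:\mathbb{R}^d\to\mathbb{R}$ be convex and differentiable, each with $L$-Lipschitz gradient, with $f=\frac1n\sum_i f_i$ $\lambda$-strongly convex with minimizer $x^*$. Assume the sparsity structure and the asynchronous SVRG model described in the context, with staleness bound $\tau$ and sparsity constant $\Delta$. Suppose the step size $\eta>0$ and epoch size $m$ satisfy $2L^2\Delta\eta^2\tau^2<1$ and $$0<\theta_s:=\frac{\frac{1}{\lambda\eta m}+4L\,\frac{\eta+L\Delta\tau^2\eta^2}{1-2L^2\Delta\eta^2\tau^2}}{1-4L\,\frac{\eta+L\Delta\tau^2\eta^2}{1-2L^2\Delta\eta^2\tau^2}}<1,$$ with positive denominator. If the epoch-end selection probabilities are $p_j=1/m$ for all $j\in[m]$, then for every $k\ge0$, $$\mathbb{E}\big[f(\tilde x^{k+1})-f(x^* )\big]\le\theta_s\,\mathbb{E}\big[f(\tilde x^{k})-f(x^* )\big].$$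
   Context: Sparsity: each $f_i$ depends only on the coordinates of $x$ indexed by a set $e_i\subseteq[d]$. Write $\|x\|_i^2=\sum_{j\in e_i}x_j^2$, and let $\Delta$ be the smallest constant such that $\frac1n\sum_{i=1}^n\|x\|_i^2\le\Delta\|x\|^2$ for all $x\in\mathbb{R}^d$. Asynchronous SVRG model (consistent reads, bounded staleness, synchronization once per epoch): start from $x^0$, $\tilde x^0=x^0$. Epoch $k+1$ consists of global steps $t=km,\dots,km+m-1$, with $x^{km}=\tilde x^k$. At step $t$, an index $i_t$ is drawn uniformly from $[n]$, independently of all previous indices and iterates, and $$x^{t+1}=x^t+\eta u^t,\qquad u^t=-\big[\nabla f_{i_t}(x^{D(t)})-\nabla f_{i_t}(\tilde x^k)+\nabla f(\tilde x^k)\big],$$ where $D(t)$ is an integer (not depending on $i_t$) with $km\le D(t)\le t$ and $t-D(t)\le\tau$, for a fixed nonnegative integer $\tau$; i.e. the gradient is evaluated at a possibly stale earlier iterate, at most $\tau$ steps old and not older than the start of the current epoch. At the end of epoch $k+1$, $\tilde x^{k+1}$ is chosen at random from $\{x^{km},\dots,x^{km+m-1}\}$, selecting $x^{km+j-1}$ with probability $p_j$, and $x^{(k+1)m}:=\tilde x^{k+1}$. Expectations are over all random indices and selections. *)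

(* Defs.v *)
From Stdlib Require Import Reals.
From mathcomp Require Import all_boot.
Set Implicit Arguments. Unset Strict Implicit. Unset Printing Implicit Defensive.
Open Scope R_scope.

Definition vec (d : nat) := 'I_d -> R.

Definition dot {d} (x y : vec d) : R := \big[Rplus/0]_(j < d) (x j * y j).
Definition sqnorm {d} (x : vec d) : R := dot x x.
Definition sqnorm_on {d} (e : 'I_d -> bool) (x : vec d) : R :=
  \big[Rplus/0]_(j < d | e j) (x j * x j).
Definition vadd {d} (x y : vec d) : vec d := fun j => x j + y j.
Definition vsub {d} (x y : vec d) : vec d := fun j => x j - y j.
Definition vscale {d} (a : R) (x : vec d) : vec d := fun j => a * x j.

Definition rsum (n : nat) (F : nat -> R) : R := \big[Rplus/0]_(i < n) F i.

Definition favg {d} (n : nat) (fs : nat -> vec d -> R) (x : vec d) : R :=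
  / INR n * rsum n (fun i => fs i x).
Definition gavg {d} (n : nat) (gs : nat -> vec d -> vec d) (x : vec d) : vec d :=
  fun j => / INR n * rsum n (fun i => gs i x j).

Definition has_gradient {d} (f : vec d -> R) (g : vec d -> vec d) : Prop :=
  forall x eps, 0 < eps -> exists delta, 0 < delta /\
    forall h : vec d, sqrt (sqnorm h) < delta ->
      Rabs (f (vadd x h) - f x - dot (g x) h) <= eps * sqrt (sqnorm h).

Definition convex {d} (f : vec d -> R) : Prop :=
  forall x y t, 0 <= t <= 1 ->
    f (vadd (vscale t x) (vscale (1 - t) y)) <= t * f x + (1 - t) * f y.

Definition strongly_convex {d} (lam : R) (f : vec d -> R) : Prop :=
  forall x y t, 0 <= t <= 1 ->
    f (vadd (vscale t x) (vscale (1 - t) y))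
      <= t * f x + (1 - t) * f y - lam / 2 * t * (1 - t) * sqnorm (vsub x y).

Definition lipschitz_grad {d} (L : R) (g : vec d -> vec d) : Prop :=
  forall x y, sqrt (sqnorm (vsub (g x) (g y))) <= L * sqrt (sqnorm (vsub x y)).

Definition depends_only_on {d} (e : 'I_d -> bool) (f : vec d -> R) : Prop :=
  forall x y : vec d, (forall j, e j -> x j = y j) -> f x = f y.

Definition upd (g : nat -> nat) (t v : nat) : nat -> nat :=
  fun u => if (u == t)%N then v else g u.

(* expectation over i_0,...,i_{T-1} i.i.d. uniform on {0,...,n-1} *)
Fixpoint Eidx (n T : nat) (F : (nat -> nat) -> R) : R :=
  match T with
  | O => F (fun _ => 0%N)
  | S T' => / INR n * rsum n (fun i => Eidx n T' (fun g => F (upd g T' i)))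
  end.

(* expectation over selections s_0,...,s_{K-1} i.i.d. on {0,...,m-1},
   P(s = j) = p j  (s = j means x^{km+j} is selected, i.e. p_{j+1} in paper) *)
Fixpoint Esel (m : nat) (p : nat -> R) (K : nat) (G : (nat -> nat) -> R) : R :=
  match K with
  | O => G (fun _ => 0%N)
  | S K' => rsum m (fun s => p s * Esel m p K' (fun h => G (upd h K' s)))
  end.

(* expectation over all randomness of the first K epochs *)
Definition Exp (n m : nat) (p : nat -> R) (K : nat)
    (F : (nat -> nat) -> (nat -> nat) -> R) : R :=
  Esel m p K (fun sel => Eidx n (K * m)%N (fun idx => F idx sel)).

(* ---------- asynchronous SVRG trajectory ----------
   idx t = i_t, sel k = selection at the end of epoch k+1.
   D t hi hs = delay index D(t), allowed to depend on the past indices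
   [i_0..i_{t-1}] and past selections. *)
Section Traj.
Variables (d n m : nat) (gs : nat -> vec d -> vec d) (eta : R)
  (D : nat -> seq nat -> seq nat -> nat) (x0 : vec d)
  (idx sel : nat -> nat).

(* computes x^{t+1} from xs = [x^0; ...; x^t] *)
Definition svrg_step (t : nat) (xs : seq (vec d)) : vec d :=
  let k := (t %/ m)%N in
  let xtil := nth x0 xs (k * m)%N in
  if (t.+1 %% m == 0)%N then nth x0 xs (k * m + sel k)%N
  else
    let xd := nth x0 xs (D t (map idx (iota 0 t)) (map sel (iota 0 k))) in
    fun j => nth x0 xs t j
             + eta * (- (gs (idx t) xd j - gs (idx t) xtil j + gavg n gs xtil j)).

Fixpoint svrg_traj (t : nat) : seq (vec d) :=
  match t with
  | O => [:: x0]
  | S t' => rcons (svrg_traj t') (svrg_step t' (svrg_traj t'))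
  end.

Definition snapshot (k : nat) : vec d :=
  nth x0 (svrg_traj (k * m)%N) (k * m)%N.
End Traj.

(* Main.v *)
Require Import Defs.
From HB Require Import structures.
From Stdlib Require Import Reals Lra Lia Psatz FunctionalExtensionality.
From mathcomp Require Import all_boot.
Open Scope R_scope.
Set Implicit Arguments. Unset Strict Implicit.
Set Warnings "-redundant-canonical-projection".

Lemma Rplus_assoc' : associative Rplus. Proof. move=> a b c; ring. Qed.
HB.instance Definition _ := Monoid.isComLaw.Build R 0 Rplus Rplus_assoc' Rplus_comm Rplus_0_l.

Section Sums.
Variable (I : Type) (r : seq I) (P : pred I).
Lemma sumR_plus (F G : I -> R) :
  \big[Rplus/0]_(i <- r | P i) (F i + G i) = \big[Rplus/0]_(i <- r | P i) F i + \big[Rplus/0]_(i <- r | P i) G i.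
Proof. by rewrite big_split. Qed.
Lemma sumR_scal c (F : I -> R) :
  \big[Rplus/0]_(i <- r | P i) (c * F i) = c * \big[Rplus/0]_(i <- r | P i) F i.
Proof.
apply: (big_ind2 (fun a b => a = c * b)); [ring| move=> a b c' d -> ->; ring| done].
Qed.
Lemma sumR_le (F G : I -> R) : (forall i, P i -> F i <= G i) ->
  \big[Rplus/0]_(i <- r | P i) F i <= \big[Rplus/0]_(i <- r | P i) G i.
Proof.
move=> H; apply: (big_ind2 (fun a b => a <= b)); [lra| move=> a b c' d ? ?; lra| done].
Qed.
Lemma sumR_ge0 (F : I -> R) : (forall i, P i -> 0 <= F i) ->
  0 <= \big[Rplus/0]_(i <- r | P i) F i.
Proof.
move=> H; apply: (big_ind (fun a => 0 <= a)); [lra| move=> a b ? ?; lra| done].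
Qed.
Lemma sumR_opp (F : I -> R) :
  \big[Rplus/0]_(i <- r | P i) (- F i) = - \big[Rplus/0]_(i <- r | P i) F i.
Proof. have ->: -(\big[Rplus/0]_(i <- r | P i) F i) = -1 * (\big[Rplus/0]_(i <- r | P i) F i) by ring.
rewrite -sumR_scal; apply: eq_bigr => i _; ring. Qed.
Lemma sumR_minus (F G : I -> R) :
  \big[Rplus/0]_(i <- r | P i) (F i - G i) = \big[Rplus/0]_(i <- r | P i) F i - \big[Rplus/0]_(i <- r | P i) G i.
Proof. rewrite /Rminus -sumR_opp -sumR_plus //. Qed.
Lemma sumR_0 : \big[Rplus/0]_(i <- r | P i) (0:R) = 0.
Proof. by rewrite big1. Qed.
End Sums.

Lemma sumR_swap n1 n2 (F : 'I_n1 -> 'I_n2 -> R) :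
  \big[Rplus/0]_(i < n1) \big[Rplus/0]_(j < n2) F i j = \big[Rplus/0]_(j < n2) \big[Rplus/0]_(i < n1) F i j.
Proof. exact: exchange_big. Qed.

Lemma rsum_plus n F G : rsum n (fun i => F i + G i) = rsum n F + rsum n G.
Proof. exact: sumR_plus. Qed.
Lemma rsum_scal n c F : rsum n (fun i => c * F i) = c * rsum n F.
Proof. exact: sumR_scal. Qed.
Lemma rsum_minus n F G : rsum n (fun i => F i - G i) = rsum n F - rsum n G.
Proof. exact: sumR_minus. Qed.
Lemma rsum_le n F G : (forall i, (i < n)%N -> F i <= G i) -> rsum n F <= rsum n G.
Proof. move=> H; apply: sumR_le => i _; exact: H. Qed.
Lemma rsum_ge0 n F : (forall i, (i < n)%N -> 0 <= F i) -> 0 <= rsum n F.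
Proof. move=> H; apply: sumR_ge0 => i _; exact: H. Qed.
Lemma rsum_ext n F G : (forall i, (i < n)%N -> F i = G i) -> rsum n F = rsum n G.
Proof. move=> H; apply: eq_bigr => i _; exact: H. Qed.
Lemma rsumS n F : rsum n.+1 F = rsum n F + F n.
Proof. by rewrite /rsum big_ord_recr. Qed.
Lemma rsum0 F : rsum 0 F = 0.
Proof. by rewrite /rsum big_ord0. Qed.
Lemma rsum_const n c : rsum n (fun _ => c) = INR n * c.
Proof. elim: n => [|n IH]; rewrite ?rsum0 ?rsumS ?IH ?S_INR /=; lra. Qed.
Lemma rsum_swap n1 n2 (F : nat -> nat -> R) :
  rsum n1 (fun i => rsum n2 (fun j => F i j)) = rsum n2 (fun j => rsum n1 (fun i => F i j)).
Proof. exact: sumR_swap. Qed.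
Lemma rsum_mono n1 n2 F : (n1 <= n2)%N -> (forall i, (i < n2)%N -> 0 <= F i) -> rsum n1 F <= rsum n2 F.
Proof.
move=> le H; elim: n2 le H => [|n2 IH]; first by rewrite leqn0 => /eqP ->; lra.
rewrite leq_eqVlt => /orP [/eqP -> _|lt H]; first lra.
rewrite rsumS; have := H n2 (ltnSn _); have := IH lt (fun i Hi => H i (ltnW Hi)); lra.
Qed.

Section Vec.
Variable d : nat.
Implicit Types x y z a b : vec d.

Lemma dot_comm a b : dot a b = dot b a.
Proof. apply: eq_bigr => j _; ring. Qed.
Lemma dot_linl (c1 c2 : R) a b z : dot (fun j => c1 * a j + c2 * b j) z = c1 * dot a z + c2 * dot b z.
Proof. rewrite /dot -!sumR_scal -sumR_plus; apply: eq_bigr => j _; ring. Qed.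
Lemma dot_linr (c1 c2 : R) a b z : dot z (fun j => c1 * a j + c2 * b j) = c1 * dot z a + c2 * dot z b.
Proof. rewrite /dot -!sumR_scal -sumR_plus; apply: eq_bigr => j _; ring. Qed.
Lemma dot_ext a b a' b' : (forall j, a j = a' j) -> (forall j, b j = b' j) -> dot a b = dot a' b'.
Proof. move=> H1 H2; apply: eq_bigr => j _; rewrite H1 H2 //. Qed.
Lemma dot_extp a b a' b' : (forall j, a j * b j = a' j * b' j) -> dot a b = dot a' b'.
Proof. move=> H; apply: eq_bigr => j _; exact: H. Qed.
Lemma sqnorm_ext a b : (forall j, a j = b j) -> sqnorm a = sqnorm b.
Proof. move=> H; exact: dot_ext. Qed.
Lemma dot_subl a b z : dot (fun j => a j - b j) z = dot a z - dot b z.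
Proof. rewrite -(Rmult_1_l (dot a z)) -(Rmult_1_l (dot b z)). 
have ->: 1 * dot a z - 1 * dot b z = 1 * dot a z + (-1) * dot b z by ring.
rewrite -dot_linl; apply: dot_ext => j //; ring. Qed.
Lemma dot_subr a b z : dot z (fun j => a j - b j) = dot z a - dot z b.
Proof. by rewrite dot_comm dot_subl !(dot_comm z). Qed.
Lemma dot_addl a b z : dot (fun j => a j + b j) z = dot a z + dot b z.
Proof. rewrite -(Rmult_1_l (dot a z)) -(Rmult_1_l (dot b z)) -dot_linl; apply: dot_ext => j //; ring. Qed.
Lemma dot_addr a b z : dot z (fun j => a j + b j) = dot z a + dot z b.
Proof. by rewrite dot_comm dot_addl !(dot_comm z). Qed.
Lemma dot_scall c a z : dot (fun j => c * a j) z = c * dot a z.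
Proof. rewrite /dot -sumR_scal; apply: eq_bigr => j _; ring. Qed.
Lemma dot_scalr c a z : dot z (fun j => c * a j) = c * dot z a.
Proof. by rewrite dot_comm dot_scall dot_comm. Qed.
Lemma dot_oppl a z : dot (fun j => - a j) z = - dot a z.
Proof. rewrite /dot -sumR_opp; apply: eq_bigr => j _; ring. Qed.
Lemma sqnorm_ge0 a : 0 <= sqnorm a.
Proof. apply: sumR_ge0 => j _; nra. Qed.
Lemma sqnorm_on_ge0 e a : 0 <= sqnorm_on e a.
Proof. apply: sumR_ge0 => j _; nra. Qed.
Lemma sqnorm_add a b : sqnorm (fun j => a j + b j) = sqnorm a + 2 * dot a b + sqnorm b.
Proof. rewrite /sqnorm dot_addl !dot_addr (dot_comm b a); ring. Qed.
Lemma sqnorm_sub a b : sqnorm (fun j => a j - b j) = sqnorm a - 2 * dot a b + sqnorm b.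
Proof. rewrite /sqnorm dot_subl !dot_subr (dot_comm b a); ring. Qed.
Lemma sqnorm_scal c a : sqnorm (fun j => c * a j) = c ^ 2 * sqnorm a.
Proof. rewrite /sqnorm dot_scall dot_scalr; ring. Qed.
Lemma sqnorm_opp a : sqnorm (fun j => - a j) = sqnorm a.
Proof. apply: eq_bigr => j _; ring. Qed.
Lemma young s a b : 0 < s -> 2 * dot a b <= s * sqnorm a + / s * sqnorm b.
Proof.
move=> hs; have := sqnorm_ge0 (fun j => s * a j - b j).
rewrite sqnorm_sub sqnorm_scal dot_scall => H.
have E: s * sqnorm a + / s * sqnorm b - 2 * dot a b = / s * (s ^ 2 * sqnorm a - 2 * (s * dot a b) + sqnorm b) by field; lra.
have : 0 <= / s * (s ^ 2 * sqnorm a - 2 * (s * dot a b) + sqnorm b).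
  apply: Rmult_le_pos => //; apply: Rlt_le; apply: Rinv_0_lt_compat => //.
lra.
Qed.
Lemma sqnorm_add2 a b : sqnorm (fun j => a j + b j) <= 2 * sqnorm a + 2 * sqnorm b.
Proof. rewrite sqnorm_add; have := @young 1 a b Rlt_0_1; rewrite Rinv_1; lra. Qed.
Lemma sqnorm_term a (j : 'I_d) : a j * a j <= sqnorm a.
Proof.
rewrite /sqnorm /dot (bigD1 j) //=; have := @sumR_ge0 _ (index_enum 'I_d) (fun i => i != j) (fun i => a i * a i).
move=> H; rewrite -[X in X <= _]Rplus_0_r; apply: Rplus_le_compat_l; apply: H => i _; nra.
Qed.
Lemma sqnorm_eq0 a : sqnorm a = 0 -> forall j, a j = 0.
Proof. move=> H j; have := sqnorm_term a j; nra. Qed.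
Lemma sqnorm_on_le e a : sqnorm_on e a <= sqnorm a.
Proof.
rewrite /sqnorm_on /sqnorm /dot big_mkcond /=; apply: sumR_le => j _; case: (e j); nra.
Qed.
Lemma sqrt_sqnorm_scal c a : sqrt (sqnorm (fun j => c * a j)) = Rabs c * sqrt (sqnorm a).
Proof.
rewrite sqnorm_scal sqrt_mult_alt; last by apply: pow2_ge_0.
by rewrite -Rsqr_pow2 sqrt_Rsqr_abs.
Qed.
End Vec.
Lemma Rabs_le_inv a b : Rabs a <= b -> - b <= a <= b.
Proof. rewrite /Rabs; case: Rcase_abs => H1 H2; lra. Qed.

Section Calc.
Variable d : nat.
Implicit Types x y z h w : vec d.



Lemma zero_of_small w :
  (forall eps, 0 < eps -> exists delta, 0 < delta /\ forall h,
      sqrt (sqnorm h) < delta -> Rabs (dot w h) <= eps * sqrt (sqnorm h)) ->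
  forall j, w j = 0.
Proof.
move=> H; apply: sqnorm_eq0.
have q0 := sqnorm_ge0 w.
case: (Rle_lt_or_eq_dec _ _ q0) => [qp|<-] //.
have sp := sqrt_lt_R0 _ qp.
have sq2 : sqrt (sqnorm w) * sqrt (sqnorm w) = sqnorm w by apply: sqrt_sqrt.
have [delta [dp Hd]] := H (sqrt (sqnorm w) / 2) ltac:(lra).
set s := delta / (2 * sqrt (sqnorm w)).
have s0 : 0 < s by rewrite /s; apply: Rdiv_lt_0_compat; lra.
have := Hd (fun j => s * w j).
rewrite sqrt_sqnorm_scal Rabs_pos_eq; last lra.
rewrite dot_scalr.
have E: s * sqrt (sqnorm w) = delta / 2 by rewrite /s; field; lra.
move=> /(_ ltac:(rewrite E; lra)) => HH.
have HH2 : s * sqnorm w <= s * sqnorm w / 2.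
  have -> : s * sqnorm w / 2 = sqrt (sqnorm w) / 2 * (s * sqrt (sqnorm w)).
    rewrite -{1}sq2; field.
  apply: Rle_trans HH; apply: Rle_abs.
nra.
Qed.

Lemma grad_supp e f g : depends_only_on e f -> has_gradient f g ->
  forall x (j : 'I_d), e j = false -> g x j = 0.
Proof.
move=> Hdep Hg x j ej.
pose w := fun k => if e k then 0 else g x k.
suff: forall k, w k = 0 by move=> /(_ j); rewrite /w ej.
apply: zero_of_small => eps ep.
have [delta [dp Hd]] := Hg x (eps / 2) ltac:(lra).
exists delta; split => // h hl.
pose h' := fun k => if e k then h k else 0.
have hle : sqnorm h' <= sqnorm h.
  apply: sumR_le => k _; rewrite /h'; case: (e k); nra.
have sle : sqrt (sqnorm h') <= sqrt (sqnorm h) by apply: sqrt_le_1_alt.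
have H1 := Hd h hl.
have H2 := Hd h' ltac:(lra).
have Ef : f (vadd x h) = f (vadd x h').
  apply: Hdep => k ek; rewrite /vadd /h' ek //.
have Ed : dot w h = dot (g x) h - dot (g x) h'.
  rewrite -dot_subr; apply: dot_extp => k; rewrite /w /h'; case: (e k); ring.
rewrite Ed.
have := Rabs_triang (f (vadd x h') - f x - dot (g x) h') (- (f (vadd x h) - f x - dot (g x) h)).
rewrite Rabs_Ropp.
have -> : f (vadd x h') - f x - dot (g x) h' + - (f (vadd x h) - f x - dot (g x) h) = dot (g x) h - dot (g x) h' by rewrite Ef; ring.
have := sqrt_pos (sqnorm h'). nra.
Qed.

Lemma grad_local e f g : depends_only_on e f -> has_gradient f g ->
  forall x z, (forall j, e j -> x j = z j) -> forall j, g x j = g z j.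
Proof.
move=> Hdep Hg x z Hxz.
suff: forall k, (fun k => g x k - g z k) k = 0 by move=> H j; have := H j => /= ; lra.
apply: zero_of_small => eps ep.
have [d1 [d1p H1]] := Hg x (eps / 2) ltac:(lra).
have [d2 [d2p H2]] := Hg z (eps / 2) ltac:(lra).
exists (Rmin d1 d2); split; first by apply: Rmin_glb_lt.
move=> h hl.
have A1 := H1 h (Rlt_le_trans _ _ _ hl (Rmin_l _ _)).
have A2 := H2 h (Rlt_le_trans _ _ _ hl (Rmin_r _ _)).
have Ef : f (vadd x h) = f (vadd z h) by apply: Hdep => k ek; rewrite /vadd Hxz.
have Ef0 : f x = f z by apply: Hdep.
rewrite dot_subl.
have := Rabs_triang (- (f (vadd x h) - f x - dot (g x) h)) (f (vadd z h) - f z - dot (g z) h).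
rewrite Rabs_Ropp.
have -> : - (f (vadd x h) - f x - dot (g x) h) + (f (vadd z h) - f z - dot (g z) h) = dot (g x) h - dot (g z) h by rewrite Ef Ef0; ring.
lra.
Qed.

Lemma fo_convex f g x y : convex f -> has_gradient f g ->
  f x + dot (g x) (fun j => y j - x j) <= f y.
Proof.
move=> Hc Hg.
set h := fun j => y j - x j. set c := dot (g x) h.
apply: Rnot_lt_le => Hlt.
set gap := f x + c - f y.
have gp : 0 < gap by rewrite /gap; lra.
set sq := sqrt (sqnorm h).
have sq0 : 0 <= sq := sqrt_pos _.
set eps := gap / (2 * (sq + 1)).
have ep : 0 < eps by rewrite /eps; apply: Rdiv_lt_0_compat; lra.
have [delta [dp Hd]] := Hg x eps ep.
set t := Rmin 1 (delta / (2 * (sq + 1))).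
have t0 : 0 < t by apply: Rmin_glb_lt; [lra| apply: Rdiv_lt_0_compat; lra].
have t1 : t <= 1 := Rmin_l _ _.
have t2 : t <= delta / (2 * (sq + 1)) := Rmin_r _ _.
have tsq : t * sq < delta.
  have : t * (2 * (sq + 1)) <= delta.
    have -> : delta = delta / (2 * (sq + 1)) * (2 * (sq + 1)) by field; lra.
    apply: Rmult_le_compat_r; lra.
  nra.
have := Hd (fun j => t * h j).
rewrite sqrt_sqnorm_scal Rabs_pos_eq; last lra.
move=> /(_ tsq).
rewrite dot_scalr.
have Ev : vadd x (fun j => t * h j) = vadd (vscale t y) (vscale (1 - t) x).
  apply: functional_extensionality => j; rewrite /vadd /vscale /h; ring.
rewrite Ev => Hf.
have Hcv := Hc y x t (conj (Rlt_le _ _ t0) t1).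
have [Hf2 _] := Rabs_le_inv Hf.
rewrite -/c -/sq in Hf2.
have H3 : t * c - eps * (t * sq) <= t * (f y - f x) by lra.
have H4 : eps * sq < gap.
  have E : eps * sq * (2*(sq+1)) = gap*sq by rewrite /eps; field; lra.
  nra.
have H5 : c - eps * sq <= f y - f x.
  apply: (Rmult_le_reg_l t) => //; lra.
rewrite /gap in H4; lra.
Qed.
End Calc.

Section Calc2.
Variable d : nat.
Implicit Types x y z h w : vec d.

Lemma line_deriv f g x h t : has_gradient f g ->
  derivable_pt_lim (fun s => f (fun j => x j + s * h j)) t
     (dot (g (fun j => x j + t * h j)) h).
Proof.
move=> Hg eps ep.
set z := fun j => x j + t * h j.
set sq := sqrt (sqnorm h).
have sq0 : 0 <= sq := sqrt_pos _.
have ep' : 0 < eps / (2 * (sq + 1)) by apply: Rdiv_lt_0_compat; lra.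
have [delta [dp Hd]] := Hg z _ ep'.
have dp' : 0 < delta / (sq + 1) by apply: Rdiv_lt_0_compat; lra.
exists (mkposreal _ dp') => s s0 /= hs.
have E : (fun j => x j + (t + s) * h j) = vadd z (fun j => s * h j).
  apply: functional_extensionality => j; rewrite /vadd /z; ring.
rewrite E.
have hs' : sqrt (sqnorm (fun j => s * h j)) < delta.
  rewrite sqrt_sqnorm_scal -/sq.
  have : Rabs s * (sq + 1) < delta.
    have -> : delta = delta / (sq + 1) * (sq + 1) by field; lra.
    apply: Rmult_lt_compat_r; lra.
  have := Rabs_pos s; nra.
have := Hd _ hs'; rewrite sqrt_sqnorm_scal -/sq dot_scalr.
move=> H.
have sa : 0 < Rabs s by apply: Rabs_pos_lt.
have -> : (f (vadd z (fun j => s * h j)) - f z) / s - dot (g z) h =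
   (f (vadd z (fun j => s * h j)) - f z - s * dot (g z) h) * / s by field.
rewrite Rabs_mult Rabs_inv.
apply: (Rle_lt_trans _ (eps / (2 * (sq + 1)) * sq)).
  apply: (Rmult_le_reg_r (Rabs s)) => //.
  rewrite Rmult_assoc Rinv_l; last lra.
  rewrite Rmult_1_r; lra.
have : eps / (2 * (sq + 1)) * sq * (2 * (sq + 1)) = eps * sq by field; lra.
nra.
Qed.

Lemma lip_sq L (g : vec d -> vec d) (a b : vec d) : lipschitz_grad L g -> 0 <= L ->
  sqnorm (vsub (g a) (g b)) <= L ^ 2 * sqnorm (vsub a b).
Proof.
move=> HL L0.
have H := HL a b.
have s1 := sqrt_pos (sqnorm (vsub (g a) (g b))).
have s2 := sqrt_pos (sqnorm (vsub a b)).
rewrite -(sqrt_sqrt (sqnorm (vsub (g a) (g b)))); last exact: sqnorm_ge0.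
rewrite -(sqrt_sqrt (sqnorm (vsub a b))); last exact: sqnorm_ge0.
have : 0 <= L * sqrt (sqnorm (vsub a b)) by nra.
nra.
Qed.

Lemma descent f g L x y : has_gradient f g -> lipschitz_grad L g -> 0 < L ->
  f y <= f x + dot (g x) (fun j => y j - x j) + L / 2 * sqnorm (fun j => y j - x j).
Proof.
move=> Hg HL L0.
set h := fun j => y j - x j.
set c := dot (g x) h.
set q := sqnorm h.
pose phi := fun s => f (fun j => x j + s * h j).
pose psi := fun s => phi s - c * s - L / 2 * q * Rsqr s.
pose l := fun s => dot (g (fun j => x j + s * h j)) h - c * 1 - L / 2 * q * (2 * s).
have Hd : forall s, derivable_pt_lim psi s (l s).
  move=> s.
  apply: (derivable_pt_lim_minus (fun s => phi s - c * s) (fun s => L / 2 * q * Rsqr s)).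
    apply: (derivable_pt_lim_minus phi (fun s => c * s)).
      exact: line_deriv.
    exact: (derivable_pt_lim_scal id c s 1 (derivable_pt_lim_id s)).
  exact: (derivable_pt_lim_scal Rsqr (L / 2 * q) s _ (derivable_pt_lim_Rsqr s)).
pose pr := fun s => exist (fun l0 => derivable_pt_abs psi s l0) (l s) (Hd s) : derivable_pt psi s.
have [c0 [Heq [c0p c01]]] := MVT_cor1 psi 0 1 pr Rlt_0_1.
have Hl : l c0 <= 0.
  rewrite /l.
  set w := fun j => g (fun j => x j + c0 * h j) j - g x j.
  have Ed : dot (g (fun j => x j + c0 * h j)) h - c = dot w h by rewrite /c /w dot_subl.
  have Hw : sqnorm w <= L ^ 2 * (c0 ^ 2 * q).
    have := lip_sq (fun j => x j + c0 * h j) x HL (Rlt_le _ _ L0).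
    have E : sqnorm (fun j => x j + c0 * h j - x j) = c0 ^ 2 * q.
      rewrite /q -sqnorm_scal; apply: sqnorm_ext => j; ring.
    by rewrite /vsub -/w E.
  have Y := @young _ (L * c0) h w ltac:(nra).
  have : / (L * c0) * sqnorm w <= / (L * c0) * (L ^ 2 * (c0 ^ 2 * q)).
    apply: Rmult_le_compat_l => //; apply: Rlt_le; apply: Rinv_0_lt_compat; nra.
  have -> : / (L * c0) * (L ^ 2 * (c0 ^ 2 * q)) = L * c0 * q by field; lra.
  rewrite -/q (dot_comm h w) in Y.
  move=> HH; lra.
have Hder : derive_pt psi c0 (pr c0) = l c0 by [].
rewrite Hder in Heq.
have E0 : psi 0 = f x.
  rewrite /psi /phi /Rsqr.
  have -> : (fun j => x j + 0 * h j) = x by apply: functional_extensionality => j; ring.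
  ring.
have E1 : psi 1 = f y - c - L / 2 * q.
  rewrite /psi /phi /Rsqr.
  have -> : (fun j => x j + 1 * h j) = y by apply: functional_extensionality => j; rewrite /h; ring.
  ring.
have : psi 1 - psi 0 <= 0 by rewrite Heq; nra.
rewrite E0 E1; lra.
Qed.
End Calc2.

Section Calc3.
Variable d : nat.
Implicit Types x y z h w : vec d.

Definition mix (e : 'I_d -> bool) x y : vec d := fun j => if e j then y j else x j.

Lemma sparse_descent e f g L x y : depends_only_on e f -> has_gradient f g ->
  lipschitz_grad L g -> 0 < L ->
  f y <= f x + dot (g x) (fun j => y j - x j) + L / 2 * sqnorm_on e (fun j => y j - x j).
Proof.
move=> Hdep Hg HL L0.
have Ey : f y = f (mix e x y) by apply: Hdep => j ej; rewrite /mix ej.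
have H := descent x (mix e x y) Hg HL L0.
have E1 : dot (g x) (fun j => mix e x y j - x j) = dot (g x) (fun j => y j - x j).
  apply: dot_extp => j; rewrite /mix; case E: (e j); first done.
  rewrite (grad_supp Hdep Hg x E); ring.
have E2 : sqnorm (fun j => mix e x y j - x j) = sqnorm_on e (fun j => y j - x j).
  rewrite /sqnorm_on big_mkcond /=; apply: eq_bigr => j _; rewrite /mix; case: (e j); ring.
rewrite E1 E2 in H; rewrite Ey; lra.
Qed.

Lemma sparse_lip e f g L x y : depends_only_on e f -> has_gradient f g ->
  lipschitz_grad L g -> 0 <= L ->
  sqnorm (fun j => g y j - g x j) <= L ^ 2 * sqnorm_on e (fun j => y j - x j).
Proof.
move=> Hdep Hg HL L0.
have Eg : forall j, g y j = g (mix e x y) j.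
  apply: (grad_local Hdep Hg) => j ej; rewrite /mix ej //.
have H := lip_sq (mix e x y) x HL L0.
have E2 : sqnorm (vsub (mix e x y) x) = sqnorm_on e (fun j => y j - x j).
  rewrite /sqnorm_on big_mkcond /=; apply: eq_bigr => j _; rewrite /vsub /mix; case: (e j); ring.
rewrite E2 in H; apply: Rle_trans H; right; apply: sqnorm_ext => j; rewrite /vsub Eg //.
Qed.

Lemma cocoercive f g L x y : convex f -> has_gradient f g ->
  lipschitz_grad L g -> 0 < L ->
  sqnorm (fun j => g x j - g y j) <= 2 * L * (f x - f y - dot (g y) (fun j => x j - y j)).
Proof.
move=> Hc Hg HL L0.
set w := fun j => g x j - g y j.
set z := fun j => x j - / L * w j.
have H1 := @fo_convex _ f g y z Hc Hg.
have H2 := descent x z Hg HL L0.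
have Ea : (fun j => z j - y j) = (fun j => (x j - y j) + (- / L) * w j).
  apply: functional_extensionality => j; rewrite /z; ring.
have Eb : (fun j => z j - x j) = (fun j => (- / L) * w j).
  apply: functional_extensionality => j; rewrite /z; ring.
rewrite Ea dot_addr dot_scalr in H1.
rewrite Eb dot_scalr sqnorm_scal in H2.
have Ew : dot (g x) w - dot (g y) w = sqnorm w by rewrite /sqnorm /w dot_subl.
have : / L * sqnorm w - L / 2 * ((- / L) ^ 2 * sqnorm w) <= f x - f y - dot (g y) (fun j => x j - y j).
  nra.
have -> : / L * sqnorm w - L / 2 * ((- / L) ^ 2 * sqnorm w) = / (2 * L) * sqnorm w by field; lra.
move=> HH.
have : 2 * L * (/ (2 * L) * sqnorm w) <= 2 * L * (f x - f y - dot (g y) (fun j => x j - y j)).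
  apply: Rmult_le_compat_l => //; lra.
have -> : 2 * L * (/ (2 * L) * sqnorm w) = sqnorm w by field; lra.
done.
Qed.
End Calc3.

Definition avg n (F : nat -> R) := / INR n * rsum n F.

Section Avg.
Variable n : nat.
Hypothesis n0 : (0 < n)%N.
Lemma INRn_pos : 0 < INR n.
Proof. apply: lt_0_INR; apply/ltP. done. Qed.
Lemma avg_plus F G : avg n (fun i => F i + G i) = avg n F + avg n G.
Proof. rewrite /avg rsum_plus; ring. Qed.
Lemma avg_minus F G : avg n (fun i => F i - G i) = avg n F - avg n G.
Proof. rewrite /avg rsum_minus; ring. Qed.
Lemma avg_scal c F : avg n (fun i => c * F i) = c * avg n F.
Proof. rewrite /avg rsum_scal; ring. Qed.
Lemma avg_le F G : (forall i, (i < n)%N -> F i <= G i) -> avg n F <= avg n G.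
Proof.
move=> H; rewrite /avg; apply: Rmult_le_compat_l; last exact: rsum_le.
apply: Rlt_le; apply: Rinv_0_lt_compat; exact: INRn_pos.
Qed.
Lemma avg_ge0 F : (forall i, (i < n)%N -> 0 <= F i) -> 0 <= avg n F.
Proof.
move=> H; rewrite /avg; apply: Rmult_le_pos; last exact: rsum_ge0.
apply: Rlt_le; apply: Rinv_0_lt_compat; exact: INRn_pos.
Qed.
Lemma avg_const c : avg n (fun _ => c) = c.
Proof. rewrite /avg rsum_const; have := INRn_pos; move=> ?; field; lra. Qed.
Lemma avg_ext F G : (forall i, (i < n)%N -> F i = G i) -> avg n F = avg n G.
Proof. move=> H; rewrite /avg (rsum_ext H) //. Qed.
End Avg.

Lemma avg_dot d n (gs : nat -> vec d -> vec d) x (v : vec d) :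
  avg n (fun i => dot (gs i x) v) = dot (gavg n gs x) v.
Proof.
rewrite /avg /rsum /dot /gavg /rsum -sumR_scal.
under eq_bigr => i _ do rewrite -sumR_scal.
rewrite exchange_big /=.
apply: eq_bigr => j _; rewrite [RHS]Rmult_comm -!sumR_scal; apply: eq_bigr => i _; ring.
Qed.

Section Prob.
Variables (d n : nat) (fs : nat -> vec d -> R) (gs : nat -> vec d -> vec d)
  (e : nat -> 'I_d -> bool) (L lam Delta : R) (xstar : vec d).
Hypothesis n0 : (0 < n)%N.
Hypothesis Hconv : forall i, (i < n)%N -> convex (fs i).
Hypothesis Hgrad : forall i, (i < n)%N -> has_gradient (fs i) (gs i).
Hypothesis Hlip : forall i, (i < n)%N -> lipschitz_grad L (gs i).
Hypothesis L0 : 0 < L.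
Hypothesis Hmin : forall x, favg n fs xstar <= favg n fs x.
Hypothesis Hdep : forall i, (i < n)%N -> depends_only_on (e i) (fs i).
Hypothesis HDelta : forall x, / INR n * rsum n (fun i => sqnorm_on (e i) x) <= Delta * sqnorm x.

Local Notation f := (favg n fs).
Local Notation gb := (gavg n gs).

Lemma favg_avg x : f x = avg n (fun i => fs i x).
Proof. by []. Qed.

Lemma gavg_zero : forall j, gb xstar j = 0.
Proof.
apply: sqnorm_eq0.
set q := sqnorm (gb xstar).
set y := fun j => xstar j - / L * gb xstar j.
set h := fun j => y j - xstar j.
have H : avg n (fun i => fs i y) <= avg n (fun i => fs i xstar + dot (gs i xstar) h + L / 2 * sqnorm h).
  apply: avg_le => // i ni; exact: descent (Hgrad ni) (Hlip ni) L0.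
rewrite !avg_plus // avg_dot avg_const // -!favg_avg in H.
have Eh : h = (fun j => (- / L) * gb xstar j) by apply: functional_extensionality => j; rewrite /h /y; ring.
rewrite Eh dot_scalr sqnorm_scal -/q in H.
have := Hmin y.
change (dot (gb xstar) (gb xstar)) with q in H.
move=> Hm.
have q0 : 0 <= q by apply: sqnorm_ge0.
have : L / 2 * ((- / L) ^ 2 * q) + - / L * q = - (/ (2 * L)) * q by field; lra.
have : 0 < / (2 * L) by apply: Rinv_0_lt_compat; lra.
nra.
Qed.

Lemma dot_gb_star v : dot (gb xstar) v = 0.
Proof.
rewrite /dot big1 // => j _; rewrite gavg_zero; ring.
Qed.

Lemma avg_coco x : avg n (fun i => sqnorm (fun j => gs i x j - gs i xstar j)) <= 2 * L * (f x - f xstar).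
Proof.
have H : avg n (fun i => sqnorm (fun j => gs i x j - gs i xstar j)) <=
   avg n (fun i => 2 * L * (fs i x - fs i xstar - dot (gs i xstar) (fun j => x j - xstar j))).
  apply: avg_le => // i ni; exact: cocoercive (Hconv ni) (Hgrad ni) (Hlip ni) L0.
rewrite avg_scal // !avg_minus // avg_dot dot_gb_star in H.
rewrite !favg_avg; lra.
Qed.

Definition uvec (xh xt : vec d) (i : nat) : vec d := fun j => - (gs i xh j - gs i xt j + gb xt j).

Lemma avg_dot_u (v xh xt : vec d) : avg n (fun i => dot v (uvec xh xt i)) = - dot (gb xh) v.
Proof.
have E : forall i, dot v (uvec xh xt i) = - dot (gs i xh) v + dot (gs i xt) v - dot (gb xt) v.
  move=> i; rewrite /uvec /dot -sumR_opp -sumR_plus -sumR_minus; apply: eq_bigr => j _; ring.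
rewrite (avg_ext (G := fun i => (-1) * dot (gs i xh) v + dot (gs i xt) v - dot (gb xt) v)); last by move=> i _; rewrite E; ring.
rewrite avg_minus // avg_plus // avg_const // avg_scal // !avg_dot; ring.
Qed.

Lemma key_descent (x xh : vec d) :
  - dot (gb xh) (fun j => x j - xstar j) <= - (f x - f xstar) + L / 2 * Delta * sqnorm (fun j => x j - xh j).
Proof.
have H : avg n (fun i => - dot (gs i xh) (fun j => x j - xstar j)) <=
   avg n (fun i => fs i xstar - fs i x + L / 2 * sqnorm_on (e i) (fun j => x j - xh j)).
  apply: avg_le => // i ni.
  have H1 := @fo_convex _ (fs i) (gs i) xh xstar (Hconv ni) (Hgrad ni).
  have H2 := @sparse_descent _ (e i) (fs i) (gs i) L xh x (Hdep ni) (Hgrad ni) (Hlip ni) L0.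
  have E : dot (gs i xh) (fun j => x j - xstar j) = dot (gs i xh) (fun j => x j - xh j) - dot (gs i xh) (fun j => xstar j - xh j).
    rewrite /dot -sumR_minus; apply: eq_bigr => j _; ring.
  lra.
rewrite (avg_ext (F := fun i => - dot (gs i xh) (fun j => x j - xstar j)) (G := fun i => (-1) * dot (gs i xh) (fun j => x j - xstar j))) in H; last by move=> i _; ring.
rewrite avg_scal // avg_dot avg_plus // avg_minus // avg_scal // -!favg_avg in H.
have HD := HDelta (fun j => x j - xh j).
rewrite -/(avg n _) in HD.
have : L / 2 * avg n (fun i => sqnorm_on (e i) (fun j => x j - xh j)) <= L / 2 * (Delta * sqnorm (fun j => x j - xh j)).
  apply: Rmult_le_compat_l => //; lra.
lra.
Qed.

Lemma step1 (x xh xt : vec d) eta : 0 < eta ->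
  avg n (fun i => sqnorm (fun j => x j + eta * uvec xh xt i j - xstar j)) <=
   sqnorm (fun j => x j - xstar j) - 2 * eta * (f x - f xstar)
   + eta * L * Delta * sqnorm (fun j => x j - xh j) + eta ^ 2 * avg n (fun i => sqnorm (uvec xh xt i)).
Proof.
move=> ep.
have E : forall i, sqnorm (fun j => x j + eta * uvec xh xt i j - xstar j) =
   sqnorm (fun j => x j - xstar j) + 2 * eta * dot (fun j => x j - xstar j) (uvec xh xt i) + eta ^ 2 * sqnorm (uvec xh xt i).
  move=> i; rewrite (@sqnorm_ext _ _ (fun j => (x j - xstar j) + eta * uvec xh xt i j)); last by move=> j; ring.
  rewrite sqnorm_add dot_scalr sqnorm_scal; ring.
rewrite (avg_ext (G := fun i => sqnorm (fun j => x j - xstar j) + (2 * eta) * dot (fun j => x j - xstar j) (uvec xh xt i) + eta ^ 2 * sqnorm (uvec xh xt i))); last by move=> i _; rewrite E.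
rewrite !avg_plus // avg_const // !avg_scal // avg_dot_u.
have := key_descent x xh.
have : 0 < 2 * eta by lra.
nra.
Qed.

Lemma var_bound (xt : vec d) :
  avg n (fun i => sqnorm (fun j => gs i xt j - gs i xstar j - gb xt j)) <=
  avg n (fun i => sqnorm (fun j => gs i xt j - gs i xstar j)).
Proof.
have E : forall i, sqnorm (fun j => gs i xt j - gs i xstar j - gb xt j) =
   sqnorm (fun j => gs i xt j - gs i xstar j) - 2 * (dot (gs i xt) (gb xt) - dot (gs i xstar) (gb xt)) + sqnorm (gb xt).
  move=> i; rewrite sqnorm_sub dot_subl; ring.
rewrite (avg_ext (fun i _ => E i)) avg_plus // avg_minus // avg_const // avg_scal // avg_minus // !avg_dot dot_gb_star.
have := sqnorm_ge0 (gb xt). rewrite /sqnorm. lra.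
Qed.

Lemma step2 (x xh xt : vec d) :
  avg n (fun i => sqnorm (uvec xh xt i)) <=
  8 * L * (f x - f xstar) + 8 * L * (f xt - f xstar) + 2 * L ^ 2 * Delta * sqnorm (fun j => xh j - x j).
Proof.
pose c i := fun j => gs i x j - gs i xstar j.
pose v i := fun j => gs i xt j - gs i xstar j - gb xt j.
pose b i := fun j => gs i xh j - gs i x j.
have H1 : forall i, sqnorm (uvec xh xt i) <= 4 * sqnorm (c i) + 4 * sqnorm (v i) + 2 * sqnorm (b i).
  move=> i.
  have E : sqnorm (uvec xh xt i) = sqnorm (fun j => (c i j - v i j) + b i j).
    rewrite -sqnorm_opp; apply: sqnorm_ext => j; rewrite /uvec /c /v /b; ring.
  rewrite E; apply: Rle_trans (sqnorm_add2 _ _) _.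
  have := sqnorm_add2 (c i) (fun j => - v i j); rewrite sqnorm_opp => H.
  have -> : (fun j => c i j - v i j) = (fun j => c i j + - v i j) by [].
  lra.
have H2 := avg_le n0 (fun i _ => H1 i).
rewrite !avg_plus // !avg_scal // in H2.
have H3 : avg n (fun i => sqnorm (c i)) <= 2 * L * (f x - f xstar) := avg_coco x.
have H4 : avg n (fun i => sqnorm (v i)) <= 2 * L * (f xt - f xstar).
  apply: Rle_trans (avg_coco xt); exact: var_bound.
have H5 : avg n (fun i => sqnorm (b i)) <= L ^ 2 * (Delta * sqnorm (fun j => xh j - x j)).
  apply: Rle_trans (_ : avg n (fun i => L ^ 2 * sqnorm_on (e i) (fun j => xh j - x j)) <= _).
    apply: avg_le => // i ni.
    exact: (@sparse_lip _ (e i) (fs i) (gs i) L x xh (Hdep ni) (Hgrad ni) (Hlip ni) (Rlt_le _ _ L0)).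
  rewrite avg_scal //; apply: Rmult_le_compat_l; first by apply: pow2_ge_0.
  exact: HDelta.
lra.
Qed.

End Prob.

Lemma sc_bound d (F : vec d -> R) lam xstar x : 0 < lam -> strongly_convex lam F ->
  (forall y, F xstar <= F y) ->
  sqnorm (fun j => x j - xstar j) <= 2 / lam * (F x - F xstar).
Proof.
move=> l0 Hsc Hm.
set q := sqnorm (fun j => x j - xstar j).
set D := F x - F xstar.
have D0 : 0 <= D by have := Hm x; rewrite /D; lra.
have q0 : 0 <= q := sqnorm_ge0 _.
suff : lam / 2 * q <= D.
  move=> H; have -> : q = 2 / lam * (lam / 2 * q) by field; lra.
  apply: Rmult_le_compat_l => //; apply: Rlt_le; apply: Rdiv_lt_0_compat; lra.
apply: Rnot_lt_le => H.
set t := (lam / 2 * q - D) / (lam * q).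
have lq : 0 < lam * q by nra.
have t0 : 0 < t by apply: Rdiv_lt_0_compat; lra.
have t1 : t <= 1.
  apply: (Rmult_le_reg_r (lam * q)) => //.
  have -> : t * (lam * q) = lam / 2 * q - D by rewrite /t /Rdiv Rmult_assoc Rinv_l; [ring | lra].
  lra.
have := Hsc x xstar t (conj (Rlt_le _ _ t0) t1).
have := Hm (vadd (vscale t x) (vscale (1 - t) xstar)).
rewrite -/q => H1 H2.
have H3 : lam / 2 * t * (1 - t) * q <= t * D by rewrite /D; lra.
have H4 : lam / 2 * (1 - t) * q <= D.
  apply: (Rmult_le_reg_l t) => //; lra.
have E : lam / 2 * (1 - t) * q = (lam / 2 * q + D) / 2.
  have E1 : t * (lam * q) = lam / 2 * q - D by rewrite /t /Rdiv Rmult_assoc Rinv_l; [ring | lra].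
  nra.
lra.
Qed.

Lemma ones_pos d : (0 < d)%N -> 0 < sqnorm (fun _ : 'I_d => 1).
Proof.
move=> d0; have := sqnorm_term (fun _ : 'I_d => 1) (Ordinal d0); lra.
Qed.

Lemma Delta_ge0 d n (e : nat -> 'I_d -> bool) Delta : (0 < d)%N -> (0 < n)%N ->
  (forall x, / INR n * rsum n (fun i => sqnorm_on (e i) x) <= Delta * sqnorm x) -> 0 <= Delta.
Proof.
move=> d0 n0 H.
have := H (fun _ => 1).
have := ones_pos d0.
have : 0 <= / INR n * rsum n (fun i => sqnorm_on (e i) (fun _ => 1)).
  apply: (avg_ge0 n0) => i _; exact: sqnorm_on_ge0.
nra.
Qed.

Lemma L_pos d n (fs : nat -> vec d -> R) gs L lam : (0 < d)%N -> (0 < n)%N ->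
  (forall i, (i < n)%N -> convex (fs i)) ->
  (forall i, (i < n)%N -> has_gradient (fs i) (gs i)) ->
  (forall i, (i < n)%N -> lipschitz_grad L (gs i)) ->
  0 < lam -> strongly_convex lam (favg n fs) -> 0 < L.
Proof.
move=> d0 n0 Hc Hg Hl l0 Hsc.
apply: Rnot_le_lt => HL.
pose a : vec d := fun _ => 0.
pose b : vec d := fun _ => 1.
have Hconst : forall i, (i < n)%N -> forall x y : vec d, forall j, gs i x j = gs i y j.
  move=> i ni x y.
  have H := Hl i ni x y.
  have s1 := sqrt_pos (sqnorm (vsub (gs i x) (gs i y))).
  have s2 := sqrt_pos (sqnorm (vsub x y)).
  have : sqrt (sqnorm (vsub (gs i x) (gs i y))) = 0 by nra.
  move=> /sqrt_eq_0 H0.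
  move=> j; have := sqnorm_eq0 (H0 (sqnorm_ge0 _)) j; rewrite /vsub; lra.
have Haff : forall i, (i < n)%N -> forall x y : vec d, fs i y = fs i x + dot (gs i x) (fun j => y j - x j).
  move=> i ni x y.
  have H1 := @fo_convex _ (fs i) (gs i) x y (Hc i ni) (Hg i ni).
  have H2 := @fo_convex _ (fs i) (gs i) y x (Hc i ni) (Hg i ni).
  have E : dot (gs i y) (fun j => x j - y j) = - dot (gs i x) (fun j => y j - x j).
    rewrite /dot -sumR_opp; apply: eq_bigr => j _; rewrite (Hconst i ni y x); ring.
  lra.
set z := vadd (vscale (1/2) b) (vscale (1 - 1/2) a).
have Hz : favg n fs z = 1/2 * favg n fs b + (1 - 1/2) * favg n fs a.
  rewrite !favg_avg -!avg_scal // -avg_plus //; apply: avg_ext => // i ni.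
  rewrite (Haff i ni a z) (Haff i ni a b).
  have -> : dot (gs i a) (fun j => z j - a j) = 1/2 * dot (gs i a) (fun j => b j - a j).
    rewrite -dot_scalr; apply: dot_ext => j //; rewrite /z /vadd /vscale /a /b; field.
  field.
have := Hsc b a (1/2) ltac:(lra).
rewrite -/z Hz.
have := ones_pos d0.
have -> : sqnorm (vsub b a) = sqnorm (fun _ : 'I_d => 1) by apply: sqnorm_ext => j; rewrite /vsub /a /b; ring.
nra.
Qed.

Lemma upd_same g t i j : upd (upd g t j) t i = upd g t i.
Proof. apply: functional_extensionality => u; rewrite /upd; case: (u == t) => //. Qed.
Lemma upd_comm g t s i j : t <> s -> upd (upd g s j) t i = upd (upd g t i) s j.
Proof.
move=> ne; apply: functional_extensionality => u; rewrite /upd.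
case E1: (u == t); case E2: (u == s) => //.
by move/eqP: E1 => E1; move/eqP: E2 => E2; exfalso; apply: ne; rewrite -E1 -E2.
Qed.
Lemma upd_other g t i u : u <> t -> upd g t i u = g u.
Proof. move=> ne; rewrite /upd; case: eqP => // E; exfalso; exact: ne. Qed.
Lemma upd_at g t i : upd g t i t = i.
Proof. by rewrite /upd eqxx. Qed.

Section E.
Variable n : nat.
Hypothesis n0 : (0 < n)%N.

Lemma Eidx_ext T F G : (forall g, F g = G g) -> Eidx n T F = Eidx n T G.
Proof. move=> H; have -> // : F = G by apply: functional_extensionality. Qed.

Lemma Eidx_lin T a b F G : Eidx n T (fun g => a * F g + b * G g) = a * Eidx n T F + b * Eidx n T G.
Proof.
elim: T F G => [|T IH] F G //=.
rewrite (rsum_ext (G := fun i => a * Eidx n T (fun g => F (upd g T i)) + b * Eidx n T (fun g => G (upd g T i)))); last by move=> i _; rewrite IH.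
rewrite rsum_plus !rsum_scal; ring.
Qed.

Lemma Eidx_plus T F G : Eidx n T (fun g => F g + G g) = Eidx n T F + Eidx n T G.
Proof. rewrite -(Rmult_1_l (Eidx n T F)) -(Rmult_1_l (Eidx n T G)) -Eidx_lin; apply: Eidx_ext => g; ring. Qed.
Lemma Eidx_scal T a F : Eidx n T (fun g => a * F g) = a * Eidx n T F.
Proof.
have := Eidx_lin T a 0 F F; rewrite Rmult_0_l Rplus_0_r => <-; apply: Eidx_ext => g; ring.
Qed.
Lemma Eidx_minus T F G : Eidx n T (fun g => F g - G g) = Eidx n T F - Eidx n T G.
Proof.
have := Eidx_lin T 1 (-1) F G => E.
have -> : Eidx n T F - Eidx n T G = 1 * Eidx n T F + -1 * Eidx n T G by ring.
rewrite -E; apply: Eidx_ext => g; ring.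
Qed.
Lemma Eidx_const T c : Eidx n T (fun _ => c) = c.
Proof.
elim: T => [|T IH] //=.
rewrite (rsum_ext (G := fun _ => c)); last by move=> i _; exact: IH.
exact: (avg_const n0).
Qed.
Lemma Eidx_le T F G : (forall g, F g <= G g) -> Eidx n T F <= Eidx n T G.
Proof.
elim: T F G => [|T IH] F G H //=.
apply: (avg_le n0) => i _; apply: IH => g; exact: H.
Qed.
Lemma Eidx_rsum T m (H : nat -> (nat -> nat) -> R) :
  Eidx n T (fun g => rsum m (fun s => H s g)) = rsum m (fun s => Eidx n T (H s)).
Proof.
elim: m => [|m IH].
  rewrite rsum0 (Eidx_ext _ (G := fun _ => 0)); [exact: Eidx_const| move=> g; exact: rsum0].
rewrite rsumS -IH -Eidx_plus; apply: Eidx_ext => g; rewrite rsumS //.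
Qed.

Lemma Eidx_resample T t F : (t < T)%N ->
  Eidx n T F = Eidx n T (fun g => avg n (fun i => F (upd g t i))).
Proof.
elim: T F => [|T IH] F //= tT.
move: tT; rewrite ltnS leq_eqVlt => /orP [/eqP teq | tlt]; last first.
  congr (_ * _); apply: rsum_ext => j _.
  rewrite (IH _ tlt); apply: Eidx_ext => g.
  apply: avg_ext => // i _; rewrite upd_comm //; move=> E; rewrite E ltnn in tlt; done.
subst t.
have E2 : rsum n (fun j => Eidx n T (fun g => avg n (fun i => F (upd (upd g T j) T i)))) =
   rsum n (fun _ => Eidx n T (fun g => avg n (fun i => F (upd g T i)))).
  apply: rsum_ext => j _; apply: Eidx_ext => g; apply: avg_ext => // i _; rewrite upd_same //.
rewrite E2 rsum_const /avg Eidx_scal Eidx_rsum.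
have := INRn_pos n0; move=> ?; field; lra.
Qed.

Lemma Eidx_extend T T' F : (forall g g', (forall u, (u < T)%N -> g u = g' u) -> F g = F g') ->
  (T <= T')%N -> Eidx n T' F = Eidx n T F.
Proof.
move=> HF; elim: T' => [|T' IH]; first by rewrite leqn0 => /eqP ->.
rewrite leq_eqVlt => /orP [/eqP -> //|lt] /=.
rewrite -IH //.
rewrite (rsum_ext (G := fun _ => Eidx n T' F)); last first.
  move=> i _; apply: Eidx_ext => g; apply: HF => u uT; rewrite upd_other //.
  move=> E; subst u; move: (leq_trans uT lt); rewrite ltnn //.
exact: (avg_const n0).
Qed.
End E.

Section S.
Variables (m : nat) (p : nat -> R).
Hypothesis p0 : forall s, (s < m)%N -> 0 <= p s.

Lemma Esel_ext K F G : (forall g, F g = G g) -> Esel m p K F = Esel m p K G.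
Proof. move=> H; have -> // : F = G by apply: functional_extensionality. Qed.
Lemma Esel_lin K a b F G : Esel m p K (fun g => a * F g + b * G g) = a * Esel m p K F + b * Esel m p K G.
Proof.
elim: K F G => [|K IH] F G //=.
rewrite (rsum_ext (G := fun s => a * (p s * Esel m p K (fun h => F (upd h K s))) + b * (p s * Esel m p K (fun h => G (upd h K s))))); last by move=> i _; rewrite IH; ring.
rewrite rsum_plus !rsum_scal; ring.
Qed.
Lemma Esel_scal K a F : Esel m p K (fun g => a * F g) = a * Esel m p K F.
Proof.
have := Esel_lin K a 0 F F; rewrite Rmult_0_l Rplus_0_r => <-; apply: Esel_ext => g; ring.
Qed.
Lemma Esel_plus K F G : Esel m p K (fun g => F g + G g) = Esel m p K F + Esel m p K G.
Proof. rewrite -(Rmult_1_l (Esel m p K F)) -(Rmult_1_l (Esel m p K G)) -Esel_lin; apply: Esel_ext => g; ring. Qed.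
Lemma Esel_le K F G : (forall g, F g <= G g) -> Esel m p K F <= Esel m p K G.
Proof.
elim: K F G => [|K IH] F G H //=.
apply: rsum_le => s sm; apply: Rmult_le_compat_l; first exact: p0.
apply: IH => g; exact: H.
Qed.
Lemma Esel_zero K : Esel m p K (fun _ => 0) = 0.
Proof. rewrite (Esel_ext _ (G := fun g => 0 * 0)); [rewrite (Esel_scal K 0 (fun _ => 0)); ring | move=> g; ring]. Qed.
Lemma Esel_rsum K m' (H : nat -> (nat -> nat) -> R) :
  Esel m p K (fun g => rsum m' (fun s => H s g)) = rsum m' (fun s => Esel m p K (H s)).
Proof.
elim: m' => [|m' IH].
  rewrite rsum0 (Esel_ext _ (G := fun _ => 0)); [exact: Esel_zero| move=> g; exact: rsum0].
rewrite rsumS -IH -Esel_plus; apply: Esel_ext => g; rewrite rsumS //.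
Qed.
End S.

From mathcomp Require Import zify.

Section Traj2.
Variables (d n m : nat) (gs : nat -> vec d -> vec d) (eta : R)
  (D : nat -> seq nat -> seq nat -> nat) (x0 : vec d).

Local Notation traj := (svrg_traj n m gs eta D x0).
Definition Xf idx sel t := nth x0 (traj idx sel t) t.

Lemma size_traj idx sel t : size (traj idx sel t) = t.+1.
Proof. elim: t => [|t IH] //=; rewrite size_rcons IH //. Qed.

Lemma nth_traj idx sel t j : (j <= t)%N -> nth x0 (traj idx sel t) j = Xf idx sel j.
Proof.
elim: t => [|t IH]; first by rewrite leqn0 => /eqP ->.
rewrite leq_eqVlt => /orP [/eqP ->|lt] //.
rewrite /= nth_rcons size_traj lt; exact: IH.
Qed.

Lemma Xf_succ idx sel t : Xf idx sel t.+1 = svrg_step n m gs eta D x0 idx sel t (traj idx sel t).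
Proof. by rewrite /Xf /= nth_rcons size_traj ltnn eqxx. Qed.

Lemma traj_idx_dep idx idx' sel t : (forall u, (u < t)%N -> idx u = idx' u) ->
  traj idx sel t = traj idx' sel t.
Proof.
elim: t => [|t IH] H //=.
have IH' := IH (fun u ut => H u (ltnW ut)).
rewrite IH'; congr rcons.
rewrite /svrg_step.
have Em : map idx (iota 0 t) = map idx' (iota 0 t).
  apply/eq_in_map => u; rewrite mem_iota add0n => /andP [_ ut]; exact: H (ltnW ut).
rewrite Em (H t (ltnSn t)) //.
Qed.

Hypothesis m0 : (0 < m)%N.

Lemma traj_sel_dep idx sel sel' k t : (forall j, (j < k)%N -> sel j = sel' j) ->
  (t < k * m + m)%N -> traj idx sel t = traj idx sel' t.
Proof.
move=> Hs; elim: t => [|t IH] //= tl.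
rewrite IH; last exact: ltnW.
congr rcons; rewrite /svrg_step.
have kle : (t %/ m <= k)%N.
  rewrite -ltnS ltn_divLR // mulSn addnC; exact: ltnW.
have Em : map sel (iota 0 (t %/ m)) = map sel' (iota 0 (t %/ m)).
  apply/eq_in_map => u; rewrite mem_iota add0n => /andP [_ ut]; apply: Hs; exact: leq_trans ut kle.
rewrite Em.
case E: (t.+1 %% m == 0)%N => //.
suff kl : (t %/ m < k)%N by rewrite Hs.
rewrite ltn_neqAle kle andbT; apply/negP => /eqP Ek.
have h1 := leq_divM t m. rewrite Ek in h1.
have Et : t.+1 = (k * m + (t.+1 - k * m))%N by rewrite subnKC // ltnW // ltnS.
move/eqP: E; rewrite Et modnMDl modn_small; last by lia.
lia.
Qed.
End Traj2.

Lemma back_tele d (Z : nat -> vec d) b q : (q <= b)%N ->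
  sqnorm (fun j => Z b j - Z (b - q)%N j) <=
  INR q * rsum q (fun i => sqnorm (fun j => Z (b - i)%N j - Z (b - i.+1)%N j)).
Proof.
elim: q => [|q IH] qb.
  rewrite subn0 rsum0 Rmult_0_r; right; rewrite /sqnorm /dot big1 // => j _; ring.
have IH' := IH (ltnW qb).
rewrite rsumS S_INR.
set S := rsum q _ in IH' *.
set v := fun j => Z b j - Z (b - q)%N j.
set w := fun j => Z (b - q)%N j - Z (b - q.+1)%N j.
have E : sqnorm (fun j => Z b j - Z (b - q.+1)%N j) = sqnorm (fun j => v j + w j).
  apply: sqnorm_ext => j; rewrite /v /w; ring.
rewrite E sqnorm_add.
have S0 : 0 <= S by rewrite /S; apply: rsum_ge0 => i _; exact: sqnorm_ge0.
have w0 : 0 <= sqnorm w := sqnorm_ge0 _.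
case: (eqVneq q 0%N) => [q0|qn0].
  have Ev : forall j, v j = 0 by move=> j; rewrite /v q0 subn0; ring.
  have -> : dot v w = 0 by rewrite /dot big1 // => j _; rewrite Ev; ring.
  have -> : sqnorm v = 0 by rewrite /sqnorm /dot big1 // => j _; rewrite Ev; ring.
  have := pos_INR q; nra.
have qp : 0 < INR q by apply: lt_0_INR; lia.
have Y := @young _ (/ INR q) v w (Rinv_0_lt_compat _ qp).
rewrite Rinv_inv in Y.
have : / INR q * sqnorm v <= / INR q * (INR q * S).
  apply: Rmult_le_compat_l => //; apply: Rlt_le; exact: Rinv_0_lt_compat.
have -> : / INR q * (INR q * S) = S by field; lra.
move=> H.
have -> : (INR q + 1) * (S + sqnorm w) = INR q * S + S + INR q * sqnorm w + sqnorm w by ring.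
have IHv : sqnorm v <= INR q * S := IH'. lra.
Qed.

Definition indR (b : bool) : R := if b then 1 else 0.
Lemma indR_ge0 b : 0 <= indR b.
Proof. rewrite /indR; case: b; lra. Qed.

Lemma shift_sum (U : nat -> R) m j :
  rsum m (fun t => indR (j < t)%N * U (t - j.+1)%N) = rsum (m - j.+1) U.
Proof.
elim: m => [|m IH]; first by rewrite !rsum0.
rewrite rsumS IH /indR.
case: (ltnP j m) => jm.
  have -> : (m.+1 - j.+1 = (m - j.+1).+1)%N by lia.
  rewrite rsumS; ring.
have -> : (m.+1 - j.+1 = m - j.+1)%N by lia.
ring.
Qed.

Lemma double_count (U : nat -> R) m tau : (forall s, (s < m)%N -> 0 <= U s) ->
  rsum m (fun t => rsum tau (fun j => indR (j < t)%N * U (t - j.+1)%N)) <= INR tau * rsum m U.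
Proof.
move=> U0; rewrite rsum_swap -rsum_const.
apply: rsum_le => j _; rewrite shift_sum; apply: rsum_mono => //; lia.
Qed.

Lemma tele_sum (Rs c : nat -> R) m : (0 < m)%N ->
  (forall t, (t.+1 < m)%N -> Rs t.+1 <= Rs t - c t) -> c m.-1 <= Rs m.-1 -> rsum m c <= Rs 0%N.
Proof.
move=> m0 H Hl.
have K : forall q, (q < m)%N -> Rs q + rsum q c <= Rs 0%N.
  elim=> [|q IH] qm; first by rewrite rsum0; lra.
  have := IH (ltnW qm); have := H q qm; rewrite rsumS; lra.
have := K m.-1 ltac:(lia).
have -> : m = m.-1.+1 by lia.
rewrite rsumS /=; lra.
Qed.
Lemma final_alg L Delta eta lam tau M Sa SU SD A R0 :
  0 < L -> 0 <= Delta -> 0 < eta -> 0 < lam -> 0 < M -> 0 <= tau ->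
  0 <= Sa -> 0 <= SU -> 0 <= SD -> 0 <= A ->
  2 * L ^ 2 * Delta * eta ^ 2 * tau ^ 2 < 1 ->
  let rho := 4 * L * ((eta + L * Delta * tau ^ 2 * eta ^ 2)
                      / (1 - 2 * L ^ 2 * Delta * eta ^ 2 * tau ^ 2)) in
  0 < 1 - rho ->
  SU <= 8 * L * Sa + 8 * L * (M * A) + 2 * L ^ 2 * Delta * SD ->
  SD <= tau * eta ^ 2 * (tau * SU) ->
  2 * eta * Sa - eta * L * Delta * SD - eta ^ 2 * SU <= R0 ->
  R0 <= 2 / lam * A ->
  / M * Sa <= (/ (lam * eta * M) + rho) / (1 - rho) * A.
Proof.
move=> L0 D0 e0 l0 M0 t0 Sa0 SU0 SD0 A0 hc rho hr HU HD HT HR.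
set c0 := 1 - 2 * L ^ 2 * Delta * eta ^ 2 * tau ^ 2.
set B := eta + L * Delta * tau ^ 2 * eta ^ 2.
have B1 : 0 <= L * Delta * tau ^ 2 * eta ^ 2.
  apply: Rmult_le_pos; [apply: Rmult_le_pos; [apply: Rmult_le_pos; lra| apply: pow2_ge_0]| apply: pow2_ge_0].
have B0 : 0 < B by rewrite /B; lra.
have c00 : 0 < c0 by rewrite /c0; lra.
have H1 : c0 * SU <= 8 * L * (Sa + M * A).
  have : 2 * L ^ 2 * Delta * SD <= 2 * L ^ 2 * Delta * (tau * eta ^ 2 * (tau * SU)).
    apply: Rmult_le_compat_l => //; have := pow2_ge_0 L; nra.
  rewrite /c0; nra.
have H2 : 2 * eta * Sa <= 2 / lam * A + eta * B * SU.
  have : eta * L * Delta * SD <= eta * L * Delta * (tau * eta ^ 2 * (tau * SU)).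
    apply: Rmult_le_compat_l => //; have := Rmult_le_pos _ _ (Rlt_le _ _ e0) (Rlt_le _ _ L0); nra.
  rewrite /B; nra.
have Erho : rho = 4 * L * B / c0 by rewrite /rho /B /c0; field; lra.
have H3 : eta * B * SU <= 2 * eta * rho * (Sa + M * A).
  rewrite Erho.
  have -> : 2 * eta * (4 * L * B / c0) * (Sa + M * A) = eta * B / c0 * (8 * L * (Sa + M * A)) by field; lra.
  have -> : eta * B * SU = eta * B / c0 * (c0 * SU) by field; lra.
  apply: Rmult_le_compat_l => //; apply: Rlt_le; apply: Rdiv_lt_0_compat => //; nra.
have H4 : Sa * (1 - rho) <= A / (lam * eta) + rho * M * A.
  have : 2 * eta * (Sa * (1 - rho)) <= 2 * eta * (A / (lam * eta) + rho * M * A).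
    have -> : 2 * eta * (A / (lam * eta) + rho * M * A) = 2 / lam * A + 2 * eta * rho * M * A by field; lra.
    nra.
  move=> H; apply: (Rmult_le_reg_l (2 * eta)) => //; lra.
have -> : (/ (lam * eta * M) + rho) / (1 - rho) * A = / M * ((A / (lam * eta) + rho * M * A) / (1 - rho)) by field; lra.
apply: Rmult_le_compat_l; first by apply: Rlt_le; apply: Rinv_0_lt_compat.
have -> : Sa = Sa * (1 - rho) / (1 - rho) by field; lra.
rewrite /Rdiv; apply: Rmult_le_compat_r; first by apply: Rlt_le; apply: Rinv_0_lt_compat.
exact: H4.
Qed.

Section Epoch.
Variables (d n m tau : nat) (fs : nat -> vec d -> R) (gs : nat -> vec d -> vec d)
  (e : nat -> 'I_d -> bool) (L lam Delta eta : R) (xstar x0 : vec d)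
  (D : nat -> seq nat -> seq nat -> nat) (sel : nat -> nat) (k : nat).
Hypothesis m0 : (0 < m)%N.
Hypothesis HD : forall t hi hs, (t %/ m * m <= D t hi hs)%N /\ (D t hi hs <= t)%N
                   /\ (t - D t hi hs <= tau)%N.

Definition T0 := (k * m)%N.
Definition XX idx t := Xf n m gs eta D x0 idx sel (T0 + t).
Definition xt idx := Xf n m gs eta D x0 idx sel T0.
Definition Dv t idx := D (T0 + t) (map idx (iota 0 (T0 + t))) (map sel (iota 0 k)).
Definition Xh t idx := Xf n m gs eta D x0 idx sel (Dv t idx).
Definition Y t idx : vec d := fun j => XX idx t j + eta * uvec n gs (Xh t idx) (xt idx) (idx (T0 + t)%N) j.

Lemma divT t : (t < m)%N -> ((T0 + t) %/ m = k)%N.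
Proof. move=> tm; rewrite /T0 divnMDl // divn_small // addn0 //. Qed.

Lemma Dv_bounds t idx : (t < m)%N -> (T0 <= Dv t idx)%N /\ (Dv t idx <= T0 + t)%N /\ (T0 + t - Dv t idx <= tau)%N.
Proof.
move=> tm; have [h1 [h2 h3]] := HD (T0 + t) (map idx (iota 0 (T0 + t))) (map sel (iota 0 k)).
rewrite divT // in h1.
Qed.

Lemma Xf_upd idx u i t : (t <= u)%N -> Xf n m gs eta D x0 (upd idx u i) sel t = Xf n m gs eta D x0 idx sel t.
Proof.
move=> tu; rewrite /Xf (@traj_idx_dep _ n m gs eta D x0 (upd idx u i) idx sel t) // => v vt.
rewrite upd_other //; lia.
Qed.

Lemma Dv_upd t idx i : Dv t (upd idx (T0 + t) i) = Dv t idx.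
Proof.
rewrite /Dv; congr D; apply/eq_in_map => v; rewrite mem_iota add0n => /andP [_ vt].
rewrite upd_other //; lia.
Qed.

Lemma Xh_upd t idx i : (t < m)%N -> Xh t (upd idx (T0 + t) i) = Xh t idx.
Proof.
move=> tm; rewrite /Xh Dv_upd Xf_upd //; have [_ [h _]] := Dv_bounds idx tm; exact: h.
Qed.
Lemma XX_upd t idx i : XX (upd idx (T0 + t) i) t = XX idx t.
Proof. rewrite /XX Xf_upd //. Qed.
Lemma xt_upd t idx i : xt (upd idx (T0 + t) i) = xt idx.
Proof. rewrite /xt Xf_upd // leq_addr //. Qed.

Lemma X_step t idx : (t.+1 < m)%N -> XX idx t.+1 = Y t idx.
Proof.
move=> tm.
rewrite /XX addnS Xf_succ /svrg_step divT; last lia.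
have -> : ((T0 + t).+1 %% m == 0)%N = false.
  rewrite -addnS /T0 modnMDl modn_small //; lia.
apply: functional_extensionality => j /=.
have [h1 [h2 h3]] := Dv_bounds idx (ltnW tm).
rewrite /Y /uvec /XX /Xh /xt (nth_traj n m gs eta D x0 idx sel (leq_addr _ _)) // -/(Dv t idx).
rewrite (nth_traj n m gs eta D x0 idx sel h2) (nth_traj n m gs eta D x0 idx sel (leqnn _)) //.
Qed.

Hypothesis n0 : (0 < n)%N.
Hypothesis Hconv : forall i, (i < n)%N -> convex (fs i).
Hypothesis Hgrad : forall i, (i < n)%N -> has_gradient (fs i) (gs i).
Hypothesis Hlip : forall i, (i < n)%N -> lipschitz_grad L (gs i).
Hypothesis L0 : 0 < L.
Hypothesis Hmin : forall x, favg n fs xstar <= favg n fs x.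
Hypothesis Hdep : forall i, (i < n)%N -> depends_only_on (e i) (fs i).
Hypothesis HDelta : forall x, / INR n * rsum n (fun i => sqnorm_on (e i) x) <= Delta * sqnorm x.
Hypothesis eta0 : 0 < eta.

Definition NN := (k * m + m)%N.
Definition EE F := Eidx n NN F.
Definition aa t := EE (fun idx => favg n fs (XX idx t) - favg n fs xstar).
Definition AA := EE (fun idx => favg n fs (xt idx) - favg n fs xstar).
Definition RR t := EE (fun idx => sqnorm (fun j => XX idx t j - xstar j)).
Definition Dl t := EE (fun idx => sqnorm (fun j => XX idx t j - Xh t idx j)).
Definition UU t := EE (fun idx => avg n (fun i => sqnorm (uvec n gs (Xh t idx) (xt idx) i))).

Lemma TN t : (t < m)%N -> (T0 + t < NN)%N.
Proof. rewrite /T0 /NN; lia. Qed.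

Lemma E_step t : (t < m)%N ->
  EE (fun idx => sqnorm (fun j => Y t idx j - xstar j)) <=
  RR t - 2 * eta * aa t + eta * L * Delta * Dl t + eta ^ 2 * UU t.
Proof.
move=> tm.
rewrite /EE (Eidx_resample n0 (t := (T0 + t)%N)); last exact: TN.
apply: (Rle_trans _ (Eidx n NN (fun idx =>
   sqnorm (fun j => XX idx t j - xstar j) - 2 * eta * (favg n fs (XX idx t) - favg n fs xstar)
   + eta * L * Delta * sqnorm (fun j => XX idx t j - Xh t idx j)
   + eta ^ 2 * avg n (fun i => sqnorm (uvec n gs (Xh t idx) (xt idx) i))))).
  apply: (Eidx_le n0) => idx.
  rewrite (avg_ext (G := fun i => sqnorm (fun j => XX idx t j + eta * uvec n gs (Xh t idx) (xt idx) i j - xstar j))).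
    exact: (step1 xstar n0 Hconv Hgrad Hlip L0 Hdep HDelta (XX idx t) (Xh t idx) (xt idx) eta0).
  move=> i _; rewrite /Y XX_upd Xh_upd // xt_upd upd_at //.
right; rewrite /RR /aa /Dl /UU /EE Eidx_plus Eidx_plus Eidx_minus !Eidx_scal //.
Qed.

Lemma E_next t : (t.+1 < m)%N ->
  EE (fun idx => sqnorm (fun j => Y t idx j - xstar j)) = RR t.+1.
Proof. move=> tm; rewrite /RR /EE; apply: Eidx_ext => idx; rewrite X_step //. Qed.

Lemma sqnorm_symm (a b : vec d) : sqnorm (fun j => a j - b j) = sqnorm (fun j => b j - a j).
Proof. rewrite -sqnorm_opp; apply: sqnorm_ext => j; ring. Qed.

Lemma E_U t : (t < m)%N -> UU t <= 8 * L * aa t + 8 * L * AA + 2 * L ^ 2 * Delta * Dl t.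
Proof.
move=> tm.
rewrite /UU /aa /AA /Dl /EE -!Eidx_scal -!Eidx_plus.
apply: (Eidx_le n0) => idx.
rewrite (sqnorm_symm (XX idx t)).
exact: (step2 n0 Hconv Hgrad Hlip L0 Hmin Hdep HDelta (XX idx t) (Xh t idx) (xt idx)).
Qed.

Lemma E_w s : (s.+1 < m)%N ->
  EE (fun idx => sqnorm (fun j => XX idx s.+1 j - XX idx s j)) = eta ^ 2 * UU s.
Proof.
move=> sm.
rewrite /EE (@Eidx_ext n NN _ (fun idx => eta ^ 2 * sqnorm (uvec n gs (Xh s idx) (xt idx) (idx (T0 + s)%N)))); last first.
  move=> idx; rewrite X_step // /Y -sqnorm_scal; apply: sqnorm_ext => j; ring.
rewrite Eidx_scal /UU /EE (Eidx_resample n0 (t := (T0 + s)%N)); last by apply: TN; lia.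
congr (_ * _); apply: Eidx_ext => idx; apply: avg_ext => // i _.
rewrite Xh_upd; last lia.
rewrite xt_upd upd_at //.
Qed.

Lemma aa_ge0 t : 0 <= aa t.
Proof. rewrite /aa /EE -(Eidx_const n0 NN 0); apply: (Eidx_le n0) => idx; have := Hmin (XX idx t); lra. Qed.
Lemma AA_ge0 : 0 <= AA.
Proof. rewrite /AA /EE -(Eidx_const n0 NN 0); apply: (Eidx_le n0) => idx; have := Hmin (xt idx); lra. Qed.
Lemma UU_ge0 t : 0 <= UU t.
Proof. rewrite /UU /EE -(Eidx_const n0 NN 0); apply: (Eidx_le n0) => idx; apply: avg_ge0 => // i _; exact: sqnorm_ge0. Qed.
Lemma Dl_ge0 t : 0 <= Dl t.
Proof. rewrite /Dl /EE -(Eidx_const n0 NN 0); apply: (Eidx_le n0) => idx; exact: sqnorm_ge0. Qed.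

Lemma E_R0 : 0 < lam -> strongly_convex lam (favg n fs) -> RR 0 <= 2 / lam * AA.
Proof.
move=> l0 Hsc.
rewrite /RR /AA /EE -Eidx_scal; apply: (Eidx_le n0) => idx.
have -> : XX idx 0 = xt idx by rewrite /XX addn0.
exact: sc_bound.
Qed.

Lemma win_point t idx : (t < m)%N ->
  sqnorm (fun j => XX idx t j - Xh t idx j) <=
  INR tau * rsum tau (fun i => indR (i < t)%N * sqnorm (fun j => XX idx (t - i)%N j - XX idx (t - i.+1)%N j)).
Proof.
move=> tm.
have [h1 [h2 h3]] := Dv_bounds idx tm.
set Z := fun u => Xf n m gs eta D x0 idx sel u.
set b := (T0 + t)%N.
set q := (b - Dv t idx)%N.
have qb : (q <= b)%N by rewrite /q leq_subr.
have H := back_tele Z qb.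
have Eq : (b - q = Dv t idx)%N by rewrite /q subKn.
rewrite Eq in H.
have qt : (q <= t)%N by rewrite /q /b; lia.
have E1 : rsum q (fun i => sqnorm (fun j => Z (b - i)%N j - Z (b - i.+1)%N j)) =
          rsum q (fun i => indR (i < t)%N * sqnorm (fun j => XX idx (t - i)%N j - XX idx (t - i.+1)%N j)).
  apply: rsum_ext => i iq.
  have it : (i < t)%N by lia.
  rewrite /indR it Rmult_1_l /XX /Z /b.
  have -> : (T0 + t - i = T0 + (t - i))%N by lia.
  have -> : (T0 + t - i.+1 = T0 + (t - i.+1))%N by lia.
  done.
rewrite E1 in H.
have F0 : forall i, (i < tau)%N -> 0 <= indR (i < t)%N * sqnorm (fun j => XX idx (t - i)%N j - XX idx (t - i.+1)%N j).
  move=> i _; apply: Rmult_le_pos; [exact: indR_ge0 | exact: sqnorm_ge0].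
have Hm := rsum_mono (n1 := q) (n2 := tau) h3 F0.
have S0 : 0 <= rsum q (fun i => indR (i < t)%N * sqnorm (fun j => XX idx (t - i)%N j - XX idx (t - i.+1)%N j)).
  apply: rsum_ge0 => i iq; apply: Rmult_le_pos; [exact: indR_ge0 | exact: sqnorm_ge0].
have Iq : INR q <= INR tau by apply: le_INR; apply/leP.
have Hq := pos_INR q.
rewrite /Z /b in H.
apply: (Rle_trans _ _ _ H).
apply: Rmult_le_compat => //.
Qed.

Lemma E_Dl t : (t < m)%N ->
  Dl t <= INR tau * rsum tau (fun i => indR (i < t)%N * (eta ^ 2 * UU (t - i.+1)%N)).
Proof.
move=> tm.
apply: (Rle_trans _ (EE (fun idx => INR tau * rsum tau (fun i => indR (i < t)%N * sqnorm (fun j => XX idx (t - i)%N j - XX idx (t - i.+1)%N j))))).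
  apply: (Eidx_le n0) => idx; exact: win_point.
rewrite /EE Eidx_scal (Eidx_rsum n0); apply: Req_le; congr (_ * _); apply: rsum_ext => i _.
rewrite Eidx_scal /indR; case: ifP => it; last ring.
rewrite !Rmult_1_l -E_w; last lia.
have -> : (t - i = (t - i.+1).+1)%N by lia.
done.
Qed.

Lemma epoch_main : 0 <= Delta -> 0 < lam -> strongly_convex lam (favg n fs) ->
  2 * L ^ 2 * Delta * eta ^ 2 * INR tau ^ 2 < 1 ->
  let rho := 4 * L * ((eta + L * Delta * INR tau ^ 2 * eta ^ 2)
                      / (1 - 2 * L ^ 2 * Delta * eta ^ 2 * INR tau ^ 2)) in
  0 < 1 - rho ->
  / INR m * rsum m aa <= (/ (lam * eta * INR m) + rho) / (1 - rho) * AA.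
Proof.
move=> D0 l0 Hsc hc rho hr.
have M0 : 0 < INR m by apply: lt_0_INR; lia.
have HU : rsum m UU <= 8 * L * rsum m aa + 8 * L * (INR m * AA) + 2 * L ^ 2 * Delta * rsum m Dl.
  apply: (Rle_trans _ (rsum m (fun t => 8 * L * aa t + 8 * L * AA + 2 * L ^ 2 * Delta * Dl t))).
    apply: rsum_le => t tm; exact: E_U.
  rewrite !rsum_plus !rsum_scal rsum_const; lra.
have HDs : rsum m Dl <= INR tau * eta ^ 2 * (INR tau * rsum m UU).
  apply: (Rle_trans _ (rsum m (fun t => INR tau * rsum tau (fun i => indR (i < t)%N * (eta ^ 2 * UU (t - i.+1)%N))))).
    apply: rsum_le => t tm; exact: E_Dl.
  rewrite rsum_scal Rmult_assoc; apply: Rmult_le_compat_l; first exact: pos_INR.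
  rewrite (rsum_ext (G := fun t => eta ^ 2 * rsum tau (fun i => indR (i < t)%N * UU (t - i.+1)%N))); last first.
    move=> t _; rewrite -rsum_scal; apply: rsum_ext => i _; ring.
  rewrite rsum_scal; apply: Rmult_le_compat_l; first exact: pow2_ge_0.
  apply: double_count => s _; exact: UU_ge0.
have HT : 2 * eta * rsum m aa - eta * L * Delta * rsum m Dl - eta ^ 2 * rsum m UU <= RR 0%N.
  have := @tele_sum RR (fun t => 2 * eta * aa t - eta * L * Delta * Dl t - eta ^ 2 * UU t) m m0.
  rewrite !rsum_minus !rsum_scal; apply.
    move=> t tm; rewrite -E_next //; have := E_step (ltnW tm); lra.
  have := E_step (t := m.-1) ltac:(lia).
  have : 0 <= EE (fun idx => sqnorm (fun j => Y m.-1 idx j - xstar j)).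
    rewrite /EE -(Eidx_const n0 NN 0); apply: (Eidx_le n0) => idx; exact: sqnorm_ge0.
  lra.
have HR := E_R0 l0 Hsc.
have Sa0 : 0 <= rsum m aa by apply: rsum_ge0 => t _; exact: aa_ge0.
have SU0 : 0 <= rsum m UU by apply: rsum_ge0 => t _; exact: UU_ge0.
have SD0 : 0 <= rsum m Dl by apply: rsum_ge0 => t _; exact: Dl_ge0.
exact: (final_alg L0 D0 eta0 l0 M0 (pos_INR tau) Sa0 SU0 SD0 AA_ge0 hc hr HU HDs HT HR).
Qed.
End Epoch.

Lemma snap_sel d n m gs eta D (x0 : vec d) idx h k s : (0 < m)%N -> (s < m)%N ->
  snapshot n m gs eta D x0 idx (upd h k s) k.+1 = Xf n m gs eta D x0 idx h (k * m + s).
Proof.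
move=> m0 sm.
have Et : (k.+1 * m = (k * m + m.-1).+1)%N by rewrite mulSn; lia.
rewrite /snapshot -/(Xf n m gs eta D x0 idx (upd h k s) (k.+1 * m)) Et Xf_succ /svrg_step.
have Ed : ((k * m + m.-1) %/ m = k)%N by rewrite divnMDl // divn_small ?addn0 //; lia.
rewrite Ed.
have -> : ((k * m + m.-1).+1 %% m == 0)%N = true.
  by rewrite -Et modnMl.
rewrite upd_at nth_traj; last lia.
rewrite /Xf (@traj_sel_dep _ n m gs eta D x0 m0 idx (upd h k s) h k) //.
  move=> j jk; rewrite upd_other //; lia.
lia.
Qed.

Lemma Esel_S m p K G : Esel m p K.+1 G = rsum m (fun s => p s * Esel m p K (fun h => G (upd h K s))).
Proof. by []. Qed.

Theorem theorem2
  (d n m tau : nat) (fs : nat -> vec d -> R) (gs : nat -> vec d -> vec d)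
  (e : nat -> 'I_d -> bool) (L lam Delta eta : R) (xstar x0 : vec d)
  (p : nat -> R) (D : nat -> seq nat -> seq nat -> nat) :
  (0 < n)%N -> (0 < m)%N ->
  (forall i, (i < n)%N -> convex (fs i)) ->
  (forall i, (i < n)%N -> has_gradient (fs i) (gs i)) ->
  (forall i, (i < n)%N -> lipschitz_grad L (gs i)) ->
  0 < lam -> strongly_convex lam (favg n fs) ->
  (forall x, favg n fs xstar <= favg n fs x) ->
  (forall i, (i < n)%N -> depends_only_on (e i) (fs i)) ->
  (forall x, / INR n * rsum n (fun i => sqnorm_on (e i) x) <= Delta * sqnorm x) ->
  (forall Delta', (forall x, / INR n * rsum n (fun i => sqnorm_on (e i) x)
                              <= Delta' * sqnorm x) -> Delta <= Delta') ->
  (forall t hi hs, (t %/ m * m <= D t hi hs)%N /\ (D t hi hs <= t)%N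
                   /\ (t - D t hi hs <= tau)%N) ->
  0 < eta ->
  2 * L ^ 2 * Delta * eta ^ 2 * INR tau ^ 2 < 1 ->
  let rho := 4 * L * ((eta + L * Delta * INR tau ^ 2 * eta ^ 2)
                      / (1 - 2 * L ^ 2 * Delta * eta ^ 2 * INR tau ^ 2)) in
  0 < 1 - rho ->
  let theta := (/ (lam * eta * INR m) + rho) / (1 - rho) in
  0 < theta < 1 ->
  (forall j, (j < m)%N -> p j = / INR m) ->
  forall k : nat,
    Exp n m p k.+1 (fun idx sel =>
      favg n fs (snapshot n m gs eta D x0 idx sel k.+1) - favg n fs xstar)
    <= theta * Exp n m p k (fun idx sel =>
      favg n fs (snapshot n m gs eta D x0 idx sel k) - favg n fs xstar).
Proof.
move=> n0 m0 Hconv Hgrad Hlip l0 Hsc Hmin Hdep HDelta _ HD eta0 hc rho hr theta [th0 th1] Hp k.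
have M0 : 0 < INR m by apply: lt_0_INR; lia.
have p0 : forall s, (s < m)%N -> 0 <= p s.
  move=> s sm; rewrite Hp //; apply: Rlt_le; exact: Rinv_0_lt_compat.
case: (posnP d) => [d0|dpos].
  subst d.
  have Z : forall K, Exp n m p K (fun idx sel => favg n fs (snapshot n m gs eta D x0 idx sel K) - favg n fs xstar) = 0.
    move=> K; rewrite /Exp -(Esel_zero m p K); apply: Esel_ext => sel.
    rewrite -(Eidx_const n0 (K * m) 0); apply: Eidx_ext => idx.
    have -> : snapshot n m gs eta D x0 idx sel K = xstar.
      by apply: functional_extensionality => -[j hj].
    ring.
  rewrite !Z; lra.
have L0 := L_pos dpos n0 Hconv Hgrad Hlip l0 Hsc.
have D0 := Delta_ge0 dpos n0 HDelta.
rewrite /Exp Esel_S.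
rewrite (rsum_ext (G := fun s => / INR m * Esel m p k (fun h =>
    Eidx n (k * m + m) (fun idx => favg n fs (Xf n m gs eta D x0 idx h (k * m + s)) - favg n fs xstar)))); last first.
  move=> s sm; rewrite Hp //; congr (_ * _); apply: Esel_ext => h.
  have -> : (k.+1 * m = k * m + m)%N by rewrite mulSn addnC.
  apply: Eidx_ext => idx; rewrite snap_sel //.
set G := fun s h => Eidx n (k * m + m) (fun idx => favg n fs (Xf n m gs eta D x0 idx h (k * m + s)) - favg n fs xstar).
have E1 : rsum m (fun s => / INR m * Esel m p k (G s)) = Esel m p k (fun h => / INR m * rsum m (fun s => G s h)).
  rewrite Esel_scal Esel_rsum rsum_scal //.
rewrite E1 -Esel_scal.
apply: (Esel_le p0) => h.
have Hep := epoch_main x0 h k m0 HD n0 Hconv Hgrad Hlip L0 Hmin Hdep HDelta eta0 D0 l0 Hsc hc hr.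
rewrite /aa /AA /EE /XX /xt /NN /T0 in Hep.
apply: (Rle_trans _ _ _ Hep).
apply: Req_le; rewrite /theta /rho; congr (_ * _).
apply: (Eidx_extend n0) => //; last by rewrite leq_addr.
move=> g g' Hg; rewrite /xt /Xf (@traj_idx_dep _ n m gs eta D x0 g g' h) // /T0.
Qed.
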